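(* Let $R=\mathbb{F}_q+v\mathbb{F}_q+v^2\mathbb{F}_q$ with $v^3=v$, let $M$ be an $(n-1)\times(n-1)$ circulant matrix over $R$, and let $\alpha,\omega\in R$. Then the matrix $$G=\left(I_n\ \middle|\ \begin{array}{cccc}\alpha&\omega&\cdots&\omega\\ \omega&&&\\ \vdots&&M&\\ \omega&&&\end{array}\right)$$ is a generator matrix of a formally self-dual code over $R$.
   Context: $q$ is a prime power and $R=\mathbb{F}_q[v]/\langle v^3-v\rangle$. A circulant matrix is one in which each row is the cyclic shift one position to the right of the previous row. A linear code of length $N$ over $R$ is an $R$-submodule of $R^N$; $C^\perp=\{x\in R^N:\sum x_iy_i=0\ \forall y\in C\}$. For $c\in R^N$ written uniquely as $a_0+va_1+v^2a_2$ with $a_i\in\mathbb{F}_q^N$, the Gray map is $\Psi(c)=(a_0,a_0+a_2,a_1)$ and the Lee weight $w_L(c)$ is the Hamming weight of $\Psi(c)$. $C$ is formally self-dual if $C$ and $C^\perp$ have the same Lee weight enumerator $\sum_c X^{3N-w_L(c)}Y^{w_L(c)}$. *)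

(* Defs.v *)
From HB Require Import structures.
From mathcomp Require Import all_boot all_order all_algebra all_field.
From mathcomp Require Import ring.
Set Implicit Arguments. Unset Strict Implicit. Unset Printing Implicit Defensive.
Import GRing.Theory.
Local Open Scope ring_scope.

(* The ring R = F[v]/<v^3 - v> over a finite field F (|F| = q a prime power).
   An element (a0, a1, a2) represents a0 + v a1 + v^2 a2. *)
Definition Rv (F : finFieldType) : Type := (F * F * F)%type.

Section Rv.
Variable F : finFieldType.
HB.instance Definition _ := GRing.Zmodule.on (Rv F).
HB.instance Definition _ := Finite.on (Rv F).

Definition Rv_mk (a0 a1 a2 : F) : Rv F := (a0, a1, a2).
Definition c0 (x : Rv F) : F := x.1.1.
Definition c1 (x : Rv F) : F := x.1.2.
Definition c2 (x : Rv F) : F := x.2.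

Definition Rv_one : Rv F := Rv_mk 1 0 0.
(* (a0 + a1 v + a2 v^2)(b0 + b1 v + b2 v^2) using v^3 = v, v^4 = v^2 *)
Definition Rv_mul (a b : Rv F) : Rv F :=
  Rv_mk (c0 a * c0 b)
        (c0 a * c1 b + c1 a * c0 b + c1 a * c2 b + c2 a * c1 b)
        (c0 a * c2 b + c2 a * c0 b + c1 a * c1 b + c2 a * c2 b).

Lemma Rv_mulA : associative Rv_mul.
Proof. move=> [[a0 a1] a2] [[b0 b1] b2] [[d0 d1] d2].
rewrite /Rv_mul /Rv_mk /c0 /c1 /c2 /=; congr (_, _, _); ring. Qed.
Lemma Rv_mulC : commutative Rv_mul.
Proof. move=> [[a0 a1] a2] [[b0 b1] b2].
rewrite /Rv_mul /Rv_mk /c0 /c1 /c2 /=; congr (_, _, _); ring. Qed.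
Lemma Rv_mul1 : left_id Rv_one Rv_mul.
Proof. move=> [[a0 a1] a2].
rewrite /Rv_mul /Rv_one /Rv_mk /c0 /c1 /c2 /=; congr (_, _, _); rewrite ?mul1r ?mul0r ?addr0 ?add0r //. Qed.
Lemma Rv_mulDl : left_distributive Rv_mul +%R.
Proof. move=> [[a0 a1] a2] [[b0 b1] b2] [[d0 d1] d2].
rewrite /Rv_mul /Rv_mk /c0 /c1 /c2 /=; have addE (x y : Rv F) : x + y = Rv_mk (c0 x + c0 y) (c1 x + c1 y) (c2 x + c2 y).
  by case: x => [[? ?] ?]; case: y => [[? ?] ?].
rewrite addE /Rv_mul /Rv_mk /c0 /c1 /c2 /=; congr (_, _, _); ring. Qed.
Lemma Rv_one_neq0 : Rv_one != 0.
Proof. apply/eqP => /(congr1 (fun x : Rv F => x.1.1)) /= /eqP. by rewrite oner_eq0. Qed.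


HB.instance Definition _ := GRing.Zmodule_isComNzRing.Build (Rv F)
  Rv_mulA Rv_mulC Rv_mul1 Rv_mulDl Rv_one_neq0.

Definition vR : Rv F := Rv_mk 0 1 0.
End Rv.

Definition circulant (T : Type) (m : nat) (M : 'M[T]_m) : Prop :=
  forall i j i' j' : 'I_m,
    nat_of_ord i' = i.+1 -> nat_of_ord j' = (j.+1 %% m)%N ->
    M i' j' = M i j.

Definition gen_code (F : finFieldType) (k N : nat) (G : 'M[Rv F]_(k, N))
  : {set 'rV[Rv F]_N} :=
  [set c | [exists x : 'rV[Rv F]_k, c == x *m G]].

Definition dual_code (F : finFieldType) (N : nat) (C : {set 'rV[Rv F]_N})
  : {set 'rV[Rv F]_N} :=
  [set y : 'rV[Rv F]_N | [forall c in C, \sum_(i < N) c 0 i * y 0 i == 0]].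

(* Gray map Psi(a0 + v a1 + v^2 a2) = (a0, a0 + a2, a1); Lee weight is the
   Hamming weight of the image. *)
Definition lee_weight_elt (F : finFieldType) (x : Rv F) : nat :=
  addn (addn (c0 x != 0) (c0 x + c2 x != 0)) (c1 x != 0).
Definition lee_weight (F : finFieldType) (N : nat) (c : 'rV[Rv F]_N) : nat :=
  \sum_(i < N) lee_weight_elt (c 0%R i).

(* Lee weight enumerator sum_c X^(3N - w_L(c)) Y^(w_L(c)) as an element of
   Z[X][Y] (inner variable X, outer variable Y). *)
Definition lee_we (F : finFieldType) (N : nat) (C : {set 'rV[Rv F]_N})
  : {poly {poly int}} :=
  \sum_(c in C) (('X^(3 * N - lee_weight c))%:P * 'X^(lee_weight c)).

Definition formally_self_dual (F : finFieldType) (N : nat)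
  (C : {set 'rV[Rv F]_N}) : Prop :=
  lee_we C = lee_we (dual_code C).

Lemma vR_cube_sanity (F : finFieldType) : (vR F) ^+ 3 = vR F.
Proof. by rewrite !exprS expr0 mulr1 /GRing.mul /= /Rv_mul /vR /Rv_mk /c0 /c1 /c2 /=; congr (_,_,_); rewrite ?(mul0r,mulr0,mul1r,addr0,add0r). Qed.

(* Main.v *)
Require Import Defs.
From HB Require Import structures.
From mathcomp Require Import all_boot all_order all_algebra all_field.
From mathcomp Require Import zify.
Set Implicit Arguments. Unset Strict Implicit. Unset Printing Implicit Defensive.
Import GRing.Theory.
Local Open Scope ring_scope.

Section Circ.
Variables (T : Type) (m : nat) (M : 'M[T]_m.+1).
Hypothesis hM : circulant M.

Lemma circ_iter (j0 : 'I_m.+1) i : (i < m.+1)%N ->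
  M ord0 j0 = M (inord i) (inord ((j0 + i) %% m.+1)).
Proof.
elim: i => [|i IH] Hi.
  have -> : (inord 0 : 'I_m.+1) = ord0 by apply: val_inj; rewrite /= inordK.
  by rewrite addn0 modn_small // inord_val.
rewrite IH ?(ltnW Hi) //; symmetry; apply: hM.
  by rewrite !inordK // ltnW.
rewrite !inordK ?ltn_pmod //.
by rewrite addnS -[in RHS]addn1 modnDml addn1.
Qed.

Lemma circ_sym (a b : 'I_m.+1) : M (rev_ord a) b = M (rev_ord b) a.
Proof.
have key (x y : 'I_m.+1) : M (rev_ord x) y = M ord0 (inord ((x + y + 1) %% m.+1)).
  rewrite (circ_iter (inord ((x+y+1) %% m.+1)) (ltn_ord (rev_ord x))) inord_val.
  congr (M _ _); apply: val_inj; rewrite /= !inordK ?ltn_pmod // modnDml.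
  have -> : (x + y + 1 + (m.+1 - x.+1) = y + m.+1)%N by have := ltn_ord x; lia.
  by rewrite modnDr modn_small.
by rewrite !key (addnC a b).
Qed.
End Circ.

Section Main.
Variables (F : finFieldType).
Local Notation R := (Rv F).

Lemma lee_elt_opp (x : R) : lee_weight_elt (- x) = lee_weight_elt x.
Proof.
case: x => [[a0 a1] a2]; rewrite /lee_weight_elt /c0 /c1 /c2 /=.
by rewrite -opprD !oppr_eq0.
Qed.

Lemma lee_opp N (c : 'rV[R]_N) : lee_weight (- c) = lee_weight c.
Proof. by apply: eq_bigr => i _; rewrite mxE lee_elt_opp. Qed.

Lemma lee_row N1 N2 (a : 'rV[R]_N1) (b : 'rV[R]_N2) :
  lee_weight (row_mx a b) = (lee_weight a + lee_weight b)%N.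
Proof.
rewrite /lee_weight big_split_ord /=; congr (_ + _);
by apply: eq_bigr => i _; rewrite ?row_mxEl ?row_mxEr.
Qed.

Variable m : nat.
Definition sig (i : 'I_(1 + m)) : 'I_(1 + m) :=
  match split i with inl a => lshift m a | inr k => rshift 1 (rev_ord k) end.

Lemma sig_l a : sig (lshift m a) = lshift m a.
Proof. by rewrite /sig (unsplitK (inl a)). Qed.
Lemma sig_r k : sig (rshift 1 k) = rshift 1 (rev_ord k).
Proof. by rewrite /sig (unsplitK (inr k)). Qed.

Lemma sigK : involutive sig.
Proof.
move=> i; rewrite -[i]splitK; case: (split i) => [a|k] /=.
  by rewrite !sig_l.
by rewrite !sig_r rev_ordK.
Qed.

Lemma lee_perm (c : 'rV[R]_(1+m)) : lee_weight (\row_i c 0 (sig i)) = lee_weight c.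
Proof.
rewrite /lee_weight [in RHS](reindex_inj (inv_inj sigK)) /=.
by apply: eq_bigr => i _; rewrite mxE.
Qed.

Lemma sum_mulE N (c z : 'rV[R]_N) : \sum_(i < N) c 0 i * z 0 i = (c *m z^T) 0 0.
Proof. by rewrite mxE; apply: eq_bigr => i _; rewrite mxE. Qed.

Lemma gen_codeE (A : 'M[R]_(1+m)) :
  gen_code (row_mx 1%:M A) = (fun x => row_mx x (x *m A)) @: setT.
Proof.
apply/setP => c; rewrite inE; apply/existsP/imsetP => [[x /eqP ->]|[x _ ->]];
  exists x => //; by rewrite mul_mx_row mulmx1.
Qed.

Lemma GzE (A : 'M[R]_(1+m)) (z1 z2 : 'rV[R]_(1+m)) :
  row_mx 1%:M A *m (row_mx z1 z2)^T = (z1 + z2 *m A^T)^T.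
Proof. by rewrite tr_row_mx mul_row_col mul1mx linearD /= trmx_mul trmxK. Qed.

Lemma dualE (A : 'M[R]_(1+m)) :
  dual_code (gen_code (row_mx 1%:M A)) = (fun y => row_mx (- (y *m A^T)) y) @: setT.
Proof.
apply/setP => z; rewrite inE -[z]hsubmxK; move: (lsubmx z) (rsubmx z) => z1 z2.
apply/forall_inP/imsetP.
- move=> H; exists z2 => //; congr row_mx; apply/eqP; rewrite -addr_eq0.
  apply/eqP/trmx_inj; rewrite -GzE trmx0; apply/colP => i.
  have E : (delta_mx 0 i *m row_mx 1%:M A) \in gen_code (row_mx 1%:M A).
    by rewrite /gen_code inE; apply/existsP; exists (delta_mx 0 i).
  move/H/eqP: E; rewrite sum_mulE -mulmxA -rowE [(row _ _) 0 0]mxE => ->.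
  by rewrite mxE.
- move=> [y _ /eq_row_mx [-> ->]] c; rewrite /gen_code inE => /existsP [x /eqP ->].
  by rewrite sum_mulE -mulmxA GzE addNr trmx0 mulmx0 mxE.
Qed.
End Main.

Section Key.
Variables (F : finFieldType) (m : nat) (M : 'M[Rv F]_m.+1) (alpha omega : Rv F).
Hypothesis hM : circulant M.
Local Notation A := (block_mx (alpha%:M : 'M[Rv F]_1) (const_mx omega : 'M[Rv F]_(1, m.+1))
                         (const_mx omega : 'M[Rv F]_(m.+1, 1)) M).

Lemma keyA (i j : 'I_(1 + m.+1)) : A (sig i) j = A (sig j) i.
Proof.
rewrite -[i]splitK -[j]splitK.
case: (split i) => [a|k]; case: (split j) => [b|l] /=;
  rewrite ?sig_l ?sig_r ?block_mxEul ?block_mxEur ?block_mxEdl ?block_mxEdr ?mxE //.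
- by rewrite (ord1 a) (ord1 b).
- exact: circ_sym.
Qed.

Lemma mulperm (y : 'rV[Rv F]_(1 + m.+1)) :
  (\row_i y 0 (sig i)) *m A = \row_j (y *m A^T) 0 (sig j).
Proof.
apply/rowP => j; rewrite [LHS]mxE [RHS]mxE [RHS]mxE (reindex_inj (inv_inj (@sigK m.+1))) /=.
by apply: eq_bigr => i _; rewrite [(\row__ _) _ _]mxE [_^T _ _]mxE sigK keyA.
Qed.
End Key.

Theorem theorem17 (F : finFieldType) (m : nat) (hm : (0 < m)%N)
  (M : 'M[Rv F]_m) (alpha omega : Rv F) :
  circulant M ->
  formally_self_dual
    (gen_code
       (row_mx (1%:M : 'M[Rv F]_(1 + m))
               (block_mx (alpha%:M : 'M[Rv F]_1) (const_mx omega : 'M[Rv F]_(1, m))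
                         (const_mx omega : 'M[Rv F]_(m, 1)) M))).
Proof.
case: m hm M => // m _ M hM.
rewrite /formally_self_dual /lee_we dualE gen_codeE !big_imset /=; first last.
- by move=> x1 x2 _ _ /eq_row_mx [].
- by move=> x1 x2 _ _ /eq_row_mx [].
have hinj : injective (fun y : 'rV[Rv F]_(1 + m.+1) => - (\row_i y 0 (sig i))).
  apply: (can_inj (g := fun y : 'rV[Rv F]_(1 + m.+1) => - (\row_i y 0 (sig i)))).
  by move=> y; apply/rowP => i; rewrite !mxE opprK sigK.
rewrite (reindex_inj hinj) /=; apply: eq_big => [y|y _]; first by rewrite !inE.
rewrite !lee_row mulNmx (mulperm alpha omega hM) !lee_opp !lee_perm (addnC (lee_weight y)).
by [].
Qed.
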